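(* Let $A$ be a finite alphabet. Every regular function $f : A^* \to \mathbb{N}$ is $k$-repetitive for all integers $k \ge 1$.
   Context: A bimachine is a tuple $(A, M, \mu, \lambda)$ where $A$ is a finite alphabet, $M$ a finite monoid, $\mu : A^* \to M$ a monoid morphism and $\lambda : M \times A \times M \to \mathbb{N}$; it computes $f(w) = \sum_{i=1}^{|w|} \lambda(\mu(w[1{:}i-1]), w[i], \mu(w[i+1{:}|w|]))$. A function $A^* \to \mathbb{N}$ is regular if it is computed by a bimachine. For $k \ge 1$, a function $f : A^* \to \mathbb{N}$ is $k$-repetitive if there exists an integer $\omega_0 \ge 1$ such that for all words $\alpha, \beta, \alpha_0, u_1, \alpha_1, \dots, u_k, \alpha_k \in A^*$ and every positive multiple $\omega$ of $\omega_0$, setting $W(Z_1,\dots,Z_k) = \alpha_0 \prod_{i=1}^k u_i^{\omega Z_i} \alpha_i$ and $w = W(1,\dots,1)$, there exists a function $F : \mathbb{N}^k \to \mathbb{N}$ such that for all integers $X_1,\dots,X_k,Y_1,\dots,Y_k \ge 3$, $f(\alpha\, w^{2\omega-1} W(X_1,\dots,X_k)\, w^{\omega-1}\, W(Y_1,\dots,Y_k)\, w^{\omega}\, \beta) = F(X_1+Y_1, \dots, X_k+Y_k)$. *)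

(* Defs.v *)
From mathcomp Require Import all_boot.
Set Implicit Arguments. Unset Strict Implicit. Unset Printing Implicit Defensive.

Definition is_monoid (M : finType) (mul : M -> M -> M) (one : M) : Prop :=
  associative mul /\ left_id one mul /\ right_id one mul.

Definition is_monoid_morphism (A : finType) (M : finType) (mul : M -> M -> M)
  (one : M) (mu : seq A -> M) : Prop :=
  mu [::] = one /\ forall u v, mu (u ++ v) = mul (mu u) (mu v).

Fixpoint bm_aux (A : finType) (M : Type) (mu : seq A -> M)
  (lambda : M -> A -> M -> nat) (u w : seq A) : nat :=
  match w with
  | [::] => 0
  | a :: w' => lambda (mu u) a (mu w') + bm_aux mu lambda (rcons u a) w'
  end.

(* Function computed by the bimachine (A, M, mu, lambda):
   f(w) = sum_{i=1}^{|w|} lambda(mu(w[1:i-1]), w[i], mu(w[i+1:|w|])). *)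
Definition bimachine_fun (A : finType) (M : Type) (mu : seq A -> M)
  (lambda : M -> A -> M -> nat) (w : seq A) : nat :=
  bm_aux mu lambda [::] w.

Definition regular (A : finType) (f : seq A -> nat) : Prop :=
  exists (M : finType) (mul : M -> M -> M) (one : M) (mu : seq A -> M)
         (lambda : M -> A -> M -> nat),
    is_monoid mul one /\ is_monoid_morphism mul one mu /\
    forall w, f w = bimachine_fun mu lambda w.

Definition wpow (A : Type) (u : seq A) (n : nat) : seq A := flatten (nseq n u).

(* W(Z_1..Z_k) = alpha_0 u_1^{omega Z_1} alpha_1 ... u_k^{omega Z_k} alpha_k,
   with alpha indexed by 'I_k.+1 (alpha_0 = alpha ord0, alpha_i = alpha (lift ord0 (i-1)))
   and u indexed by 'I_k. *)
Definition Wword (A : Type) (k omega : nat) (alpha : 'I_k.+1 -> seq A)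
  (u : 'I_k -> seq A) (Z : 'I_k -> nat) : seq A :=
  alpha ord0 ++ flatten [seq wpow (u i) (omega * Z i) ++ alpha (lift ord0 i)
                        | i <- enum 'I_k].

Definition repetitive (A : finType) (k : nat) (f : seq A -> nat) : Prop :=
  exists omega0 : nat, 1 <= omega0 /\
  forall (a b : seq A) (alpha : 'I_k.+1 -> seq A) (u : 'I_k -> seq A) (omega : nat),
    0 < omega -> omega0 %| omega ->
    let w := Wword omega alpha u (fun _ => 1) in
    exists F : {ffun 'I_k -> nat} -> nat,
      forall X Y : {ffun 'I_k -> nat},
        (forall i, 3 <= X i) -> (forall i, 3 <= Y i) ->
        f (a ++ wpow w (2 * omega - 1) ++ Wword omega alpha u X
             ++ wpow w (omega - 1) ++ Wword omega alpha u Y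
             ++ wpow w omega ++ b)
        = F [ffun i => X i + Y i].

(* Main.v *)
Require Import Defs.
From mathcomp Require Import all_boot zify.
Set Implicit Arguments. Unset Strict Implicit. Unset Printing Implicit Defensive.

Fixpoint G (A : finType) (M : Type) (mul : M -> M -> M) (mu : seq A -> M)
  (lam : M -> A -> M -> nat) (l : M) (w : seq A) (r : M) : nat :=
  match w with
  | [::] => 0
  | a :: w' => lam l a (mul (mu w') r) + G mul mu lam (mul l (mu [:: a])) w' r
  end.

Lemma bm_G (A : finType) (M : Type) (mul : M -> M -> M) (one : M) (mu : seq A -> M)
  (lam : M -> A -> M -> nat) :
  right_id one mul -> (forall u v, mu (u ++ v) = mul (mu u) (mu v)) ->
  forall w u, bm_aux mu lam u w = G mul mu lam (mu u) w one.
Proof.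
move=> rid hm; elim=> [|a w IH] u //=.
by rewrite rid IH -cats1 hm.
Qed.

Lemma G_cat (A : finType) (M : Type) (mul : M -> M -> M) (one : M) (mu : seq A -> M)
  (lam : M -> A -> M -> nat) :
  associative mul -> right_id one mul -> mu [::] = one ->
  (forall u v, mu (u ++ v) = mul (mu u) (mu v)) ->
  forall u v l r, G mul mu lam l (u ++ v) r =
    G mul mu lam l u (mul (mu v) r) + G mul mu lam (mul l (mu u)) v r.
Proof.
move=> mA rid h0 hm; elim=> [|a u IH] v l r /=.
  by rewrite h0 rid.
rewrite IH hm mA addnA; congr (_ + _ + G _ _ _ _ _ _).
by rewrite -mA -hm.
Qed.

Definition mpow (M : Type) (mul : M -> M -> M) (one : M) (x : M) (n : nat) : M :=
  iter n (mul x) one.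

Lemma mpow_add (M : Type) (mul : M -> M -> M) (one : M) x m n :
  associative mul -> left_id one mul ->
  mpow mul one x (m + n) = mul (mpow mul one x m) (mpow mul one x n).
Proof.
move=> mA lid; elim: m => [|m IH] /=; first by rewrite /mpow /= lid.
by rewrite /mpow /= -/(mpow mul one x (m + n)) IH mA.
Qed.

Lemma mu_wpow (A : finType) (M : Type) (mul : M -> M -> M) (one : M) (mu : seq A -> M) u n :
  mu [::] = one -> (forall u v, mu (u ++ v) = mul (mu u) (mu v)) ->
  mu (wpow u n) = mpow mul one (mu u) n.
Proof.
move=> h0 hm; elim: n => [|n IH] //=.
by rewrite /wpow /= hm -/(wpow u n) IH.
Qed.

Lemma wpow_add (A : Type) (u : seq A) m n : wpow u (m + n) = wpow u m ++ wpow u n.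
Proof. by elim: m => [|m IH] //=; rewrite /wpow /= -/(wpow u _) IH catA. Qed.

Lemma mpow_idem_aux (M : finType) (mul : M -> M -> M) (one : M) x om i j :
  associative mul -> left_id one mul ->
  0 < om -> #|M|`! %| om -> i < j -> j <= #|M| ->
  mpow mul one x i = mpow mul one x j ->
  mul (mpow mul one x om) (mpow mul one x om) = mpow mul one x om.
Proof.
move=> mA lid om0 hd hij hjn heq.
set p := j - i.
have per : forall t c, mpow mul one x (i + t + c * p) = mpow mul one x (i + t).
  move=> t; elim=> [|c IH]; first by rewrite addn0.
  have -> : i + t + c.+1 * p = j + (t + c * p) by rewrite mulSn /p; lia.
  by rewrite mpow_add // -heq -mpow_add // addnA IH.
have hp : p %| om.
  apply: dvdn_trans hd; apply: dvdn_fact; rewrite /p; lia.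
have hn : #|M| <= om.
  apply: dvdn_leq => //; apply: dvdn_trans hd; apply: dvdn_fact; lia.
rewrite -mpow_add //.
have -> : om + om = i + (om - i) + (om %/ p) * p by rewrite divnK //; lia.
by rewrite per; congr mpow; lia.
Qed.

Lemma mpow_idem (M : finType) (mul : M -> M -> M) (one : M) x om :
  associative mul -> left_id one mul ->
  0 < om -> #|M|`! %| om ->
  mul (mpow mul one x om) (mpow mul one x om) = mpow mul one x om.
Proof.
move=> mA lid om0 hd.
pose f := fun i : 'I_#|M|.+1 => mpow mul one x i.
case: (boolP [forall i, forall j, (f i == f j) ==> (i == j)]) => H.
  have inj : injective f.
    move=> i j /eqP hij; move/forallP: H => /(_ i) /forallP /(_ j).
    by rewrite hij /= => /eqP.
  by have := leq_card f inj; rewrite card_ord ltnn.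
move/forallPn: H => [i /forallPn [j]]; rewrite negb_imply => /andP [/eqP hf hne].
case: (ltngtP i j) => hij.
- apply: (mpow_idem_aux (i:=i) (j:=j)) => //; last by have := ltn_ord j.
- apply: (mpow_idem_aux (i:=j) (j:=i)) => //; last by have := ltn_ord i.
- by move: hne; rewrite (val_inj hij) eqxx.
Qed.

Lemma mpow_per (M : Type) (mul : M -> M -> M) (one : M) x om m :
  associative mul -> left_id one mul ->
  mul (mpow mul one x om) (mpow mul one x om) = mpow mul one x om ->
  om <= m -> mpow mul one x (m + om) = mpow mul one x m.
Proof.
move=> mA lid hid hm.
by rewrite -(subnK hm) -addnA !mpow_add // hid.
Qed.

Lemma mpow_mulc (M : Type) (mul : M -> M -> M) (one : M) x om c :
  associative mul -> left_id one mul ->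
  mul (mpow mul one x om) (mpow mul one x om) = mpow mul one x om ->
  0 < c -> mpow mul one x (om * c) = mpow mul one x om.
Proof.
move=> mA lid hid; elim: c => [|c IH] // _.
case: c IH => [|c] IH; first by rewrite muln1.
by rewrite mulnS addnC mpow_add // IH.
Qed.

Lemma mu_flat (A : finType) (M : Type) (mul : M -> M -> M) (mu : seq A -> M)
  (I : Type) (B : I -> nat -> seq A) (s : seq I) :
  (forall u v, mu (u ++ v) = mul (mu u) (mu v)) ->
  (forall i n, 0 < n -> mu (B i n) = mu (B i 1)) ->
  forall Z : I -> nat, (forall i, 0 < Z i) ->
  mu (flatten [seq B i (Z i) | i <- s]) = mu (flatten [seq B i 1 | i <- s]).
Proof.
move=> hm hB Z hZ; elim: s => [|i s IH] //=.
by rewrite !hm IH hB.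
Qed.

Lemma G_flat (A : finType) (M : Type) (mul : M -> M -> M) (one : M) (mu : seq A -> M)
  (lam : M -> A -> M -> nat) (I : Type) (B : I -> nat -> seq A) (s : seq I) :
  associative mul -> right_id one mul -> mu [::] = one ->
  (forall u v, mu (u ++ v) = mul (mu u) (mu v)) ->
  (forall i n, 0 < n -> mu (B i n) = mu (B i 1)) ->
  forall X Y X' Y' : I -> nat,
  (forall i, 0 < X i) -> (forall i, 0 < Y i) ->
  (forall i, 0 < X' i) -> (forall i, 0 < Y' i) ->
  (forall i l r, G mul mu lam l (B i (X i)) r + G mul mu lam l (B i (Y i)) r =
                 G mul mu lam l (B i (X' i)) r + G mul mu lam l (B i (Y' i)) r) ->
  forall l r,
  G mul mu lam l (flatten [seq B i (X i) | i <- s]) r +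
  G mul mu lam l (flatten [seq B i (Y i) | i <- s]) r =
  G mul mu lam l (flatten [seq B i (X' i) | i <- s]) r +
  G mul mu lam l (flatten [seq B i (Y' i) | i <- s]) r.
Proof.
move=> mA rid h0 hm hB X Y X' Y' hX hY hX' hY' hbl.
elim: s => [|i s IH] l r //=.
rewrite !(G_cat lam mA rid h0 hm).
rewrite !(mu_flat s hm hB) // !(hB i) //.
have := hbl i l (mul (mu (flatten [seq B i0 1 | i0 <- s])) r).
have := IH (mul l (mu (B i 1))) r.
lia.
Qed.

Lemma G_affine (A : finType) (M : Type) (mul : M -> M -> M) (one : M) (mu : seq A -> M)
  (lam : M -> A -> M -> nat) (u : seq A) om :
  associative mul -> left_id one mul -> right_id one mul -> mu [::] = one ->
  (forall u v, mu (u ++ v) = mul (mu u) (mu v)) ->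
  mul (mpow mul one (mu u) om) (mpow mul one (mu u) om) = mpow mul one (mu u) om ->
  forall m l r,
  G mul mu lam l (wpow u (om * (m + 2))) r =
  G mul mu lam l (wpow u (om * 2)) r +
  m * G mul mu lam (mul l (mpow mul one (mu u) om)) (wpow u om)
        (mul (mpow mul one (mu u) om) r).
Proof.
move=> mA lid rid h0 hm hid.
set e := mpow mul one (mu u) om.
have hmu : forall c, 0 < c -> mu (wpow u (om * c)) = e.
  move=> c hc; rewrite (mu_wpow _ _ h0 hm) mpow_mulc //.
have hmu1 : mu (wpow u om) = e by rewrite -(muln1 om) hmu.
have step : forall n l r, 2 <= n ->
   G mul mu lam l (wpow u (om * n.+1)) r =
   G mul mu lam l (wpow u (om * n)) r +
   G mul mu lam (mul l e) (wpow u om) (mul e r).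
  move=> n l r hn.
  have -> : om * n.+1 = om + (om + om * n.-1).
    by case: (n) hn => [|n'] // _; rewrite !mulnS.
  have -> : om * n = om + om * n.-1.
    by case: (n) hn => [|n'] // _; rewrite !mulnS.
  rewrite !wpow_add !(G_cat lam mA rid h0 hm) hm !hmu1 hmu ?hid -?mA ?hid;
    last by case: n hn => [|[|n]].
  rewrite -/e; lia.
elim=> [|m IH] l r; first by rewrite mul0n addn0.
by rewrite addSn step ?IH ?mulSn; [lia|lia].
Qed.

Lemma G_pair (A : finType) (M : Type) (mul : M -> M -> M) (one : M) (mu : seq A -> M)
  (lam : M -> A -> M -> nat) (u : seq A) om :
  associative mul -> left_id one mul -> right_id one mul -> mu [::] = one ->
  (forall u v, mu (u ++ v) = mul (mu u) (mu v)) ->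
  mul (mpow mul one (mu u) om) (mpow mul one (mu u) om) = mpow mul one (mu u) om ->
  forall x y x' y', 2 <= x -> 2 <= y -> 2 <= x' -> 2 <= y' -> x + y = x' + y' ->
  forall l r,
  G mul mu lam l (wpow u (om * x)) r + G mul mu lam l (wpow u (om * y)) r =
  G mul mu lam l (wpow u (om * x')) r + G mul mu lam l (wpow u (om * y')) r.
Proof.
move=> mA lid rid h0 hm hid x y x' y' hx hy hx' hy' hs l r.
have := G_affine lam mA lid rid h0 hm hid.
move=> aff.
rewrite -(subnK hx) -(subnK hy) -(subnK hx') -(subnK hy') !aff.
set D := G mul mu lam (mul l (mpow mul one (mu u) om)) (wpow u om) (mul (mpow mul one (mu u) om) r).
have : (x - 2) * D + (y - 2) * D = (x' - 2) * D + (y' - 2) * D.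
  by rewrite -!mulnDl; congr (_ * _); lia.
lia.
Qed.

Unset Implicit Arguments.

Theorem mainTheorem2 (A : finType) (f : seq A -> nat) :
  regular f -> forall k : nat, 1 <= k -> repetitive k f.
Proof.
move=> [M [mul [one [mu [lam [[mA [lid rid]] [[h0 hm] hf]]]]]]] k _.
exists #|M|`!; split; first exact: fact_gt0.
move=> a b alpha u om om0 hd w.
have idem : forall x, mul (mpow mul one x om) (mpow mul one x om) = mpow mul one x om.
  by move=> x; apply: mpow_idem.
pose B := fun (i : 'I_k) n => wpow (u i) (om * n) ++ alpha (lift ord0 i).
have hB : forall i n, 0 < n -> mu (B i n) = mu (B i 1).
  move=> i n hn; rewrite /B !hm !(mu_wpow _ _ h0 hm) !mpow_mulc //.
have hWmu : forall Z, (forall i, 0 < Z i) -> mu (Wword om alpha u Z) = mu w.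
  move=> Z hZ; rewrite /w /Wword !hm.
  by rewrite (mu_flat (B := B) (enum 'I_k) hm hB hZ).
have hWpair : forall X Y X' Y' : 'I_k -> nat,
   (forall i, 2 <= X i) -> (forall i, 2 <= Y i) ->
   (forall i, 2 <= X' i) -> (forall i, 2 <= Y' i) ->
   (forall i, X i + Y i = X' i + Y' i) ->
   forall l r,
   G mul mu lam l (Wword om alpha u X) r + G mul mu lam l (Wword om alpha u Y) r =
   G mul mu lam l (Wword om alpha u X') r + G mul mu lam l (Wword om alpha u Y') r.
  move=> X Y X' Y' hX hY hX' hY' hs l r.
  have h1 : forall Z : 'I_k -> nat, (forall i, 2 <= Z i) -> forall i, 0 < Z i.
    by move=> Z hZ i; have := hZ i; lia.
  have hWB : forall Z, Wword om alpha u Z = alpha ord0 ++ flatten [seq B i (Z i) | i <- enum 'I_k] by [].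
  rewrite !hWB !(G_cat lam mA rid h0 hm (alpha ord0)).
  have hX1 := h1 _ hX; have hY1 := h1 _ hY; have hX1' := h1 _ hX'; have hY1' := h1 _ hY'.
  rewrite (mu_flat (B := B) (enum 'I_k) hm hB hX1) (mu_flat (B := B) (enum 'I_k) hm hB hY1).
  rewrite (mu_flat (B := B) (enum 'I_k) hm hB hX1') (mu_flat (B := B) (enum 'I_k) hm hB hY1').
  have hbl : forall i l' r',
    G mul mu lam l' (B i (X i)) r' + G mul mu lam l' (B i (Y i)) r' =
    G mul mu lam l' (B i (X' i)) r' + G mul mu lam l' (B i (Y' i)) r'.
    move=> i l' r'; rewrite /B !(G_cat lam mA rid h0 hm) ?hm !(mu_wpow _ _ h0 hm).
    rewrite !mpow_mulc //.
    have := G_pair lam mA lid rid h0 hm (idem (mu (u i))) (hX i) (hY i) (hX' i) (hY' i)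
            (hs i) l' (mul (mu (alpha (lift ord0 i))) r').
    lia.
  have := G_flat (lam := lam) (B := B) (enum 'I_k) mA rid h0 hm hB hX1 hY1 hX1' hY1' hbl
            (mul l (mu (alpha ord0))) r.
  lia.
exists (fun Z : {ffun 'I_k -> nat} =>
  f (a ++ wpow w (2 * om - 1) ++ Wword om alpha u (fun _ => 3)
       ++ wpow w (om - 1) ++ Wword om alpha u (fun i => Z i - 3)
       ++ wpow w om ++ b)).
move=> X Y hX hY.
rewrite !hf /bimachine_fun !(bm_G lam rid hm) h0.
set X' : 'I_k -> nat := fun _ => 3.
set Y' : 'I_k -> nat := fun i => [ffun i => X i + Y i] i - 3.
have hX' : forall i, 3 <= X' i by [].
have hY' : forall i, 3 <= Y' i by move=> i; rewrite /Y' ffunE; have := hX i; have := hY i; lia.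
have hs : forall i, X i + Y i = X' i + Y' i.
  by move=> i; rewrite /Y' /X' ffunE; have := hX i; have := hY i; lia.
have g1 : forall Z : 'I_k -> nat, (forall i, 3 <= Z i) -> forall i, 0 < Z i.
  by move=> Z hZ i; have := hZ i; lia.
have g2 : forall Z : 'I_k -> nat, (forall i, 3 <= Z i) -> forall i, 2 <= Z i.
  by move=> Z hZ i; have := hZ i; lia.
rewrite !(catA a).
rewrite !(G_cat lam mA rid h0 hm (a ++ _)).
have GW := fun Z => G_cat lam mA rid h0 hm (Wword om alpha u Z).
rewrite (GW X) (GW X').
rewrite !(G_cat lam mA rid h0 hm (wpow w (om - 1))).
rewrite (GW Y) (GW Y').
do 3 rewrite ?(hm a) ?(hm (Wword om alpha u X)) ?(hm (Wword om alpha u Y)) ?(hm (Wword om alpha u X')) ?(hm (Wword om alpha u Y')) ?(hm (wpow w _)).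
rewrite (hWmu _ (g1 _ hX)) (hWmu _ (g1 _ hY)) (hWmu _ (g1 _ hX')) (hWmu _ (g1 _ hY')).
rewrite !(mu_wpow _ _ h0 hm).
set s := mu w.
have e1 : forall n, mul s (mpow mul one s n) = mpow mul one s n.+1 by [].
have hL : mul (mul (mul one (mul (mu a) (mpow mul one s (2 * om - 1)))) s)
              (mpow mul one s (om - 1)) = mul one (mul (mu a) (mpow mul one s (2 * om - 1))).
  rewrite !lid -!mA e1 -mpow_add // (_ : (om - 1).+1 = om); last lia.
  by rewrite mpow_per //; lia.
have hR : mul (mul (mpow mul one s (om - 1)) (mul s (mul (mpow mul one s om) (mu b)))) one
          = mul (mul (mpow mul one s om) (mu b)) one.
  rewrite !rid (mA s) e1 mA -mpow_add // (_ : om - 1 + om.+1 = om + om); last lia.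
  by rewrite mpow_per.
rewrite hL hR.
have := hWpair _ _ _ _ (g2 _ hX) (g2 _ hY) (g2 _ hX') (g2 _ hY') hs
  (mul one (mul (mu a) (mpow mul one s (2 * om - 1))))
  (mul (mul (mpow mul one s (om - 1)) (mul s (mul (mpow mul one s om) (mu b)))) one).
rewrite hR.
lia.
Qed.
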